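(* Let $X\in\mathbb{R}^{n\times d}$ with rows $x_1,\dots,x_n$, weighted by $w\in\mathbb{R}^n_{>0}$, be $\mu$-complex. Let $U$ be a matrix whose columns form an orthonormal basis of the column space of $D_wX$, with rows $U_i$. If $i\in[n]$ and $\beta\in\mathbb{R}^d$ satisfy $x_i\beta\ge 0.5$, then $w_i\,g(x_i\beta)\le 2(1+\mu)\|U_i\|_2\, f_w(X\beta)$.
   Context: $g(z)=\ln(1+e^z)$ and $f_w(X\beta)=\sum_{j=1}^n w_j g(x_j\beta)$. $D_w$ is the diagonal matrix with $(D_w)_{ii}=w_i$. For a vector $v$, $v^+$ and $v^-$ denote the vectors of its positive and negative entries. $\mu_w(X)=\sup_{\beta:\,D_wX\beta\neq0}\|(D_wX\beta)^+\|_1/\|(D_wX\beta)^-\|_1$, and $X$ weighted by $w$ is $\mu$-complex if $\mu_w(X)\le\mu$. *)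

(* Defs.v *)
From Stdlib Require Import Reals Lra Lia.
Open Scope R_scope.

Fixpoint rsum (n : nat) (f : nat -> R) : R :=
  match n with
  | O => 0
  | S m => rsum m f + f m
  end.

(* Matrices are functions nat -> nat -> R (entry (i,j)), only indices i<n, j<d matter.
   Vectors are functions nat -> R. *)

Definition g (z : R) : R := ln (1 + exp z).

Definition rowdot (d : nat) (X : nat -> nat -> R) (i : nat) (beta : nat -> R) : R :=
  rsum d (fun j => X i j * beta j).

Definition f_w (n d : nat) (w : nat -> R) (X : nat -> nat -> R) (beta : nat -> R) : R :=
  rsum n (fun j => w j * g (rowdot d X j beta)).

Definition DwXb (d : nat) (w : nat -> R) (X : nat -> nat -> R) (beta : nat -> R) : nat -> R :=
  fun i => w i * rowdot d X i beta.

Definition pos_norm1 (n : nat) (v : nat -> R) : R := rsum n (fun i => Rmax (v i) 0).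
Definition neg_norm1 (n : nat) (v : nat -> R) : R := rsum n (fun i => Rmax (- v i) 0).

Definition vzero (n : nat) (v : nat -> R) : Prop := forall i, (i < n)%nat -> v i = 0.

(* X weighted by w is mu-complex:  mu_w(X) = sup_{beta : D_w X beta <> 0}
   ||(D_wXb)^+||_1 / ||(D_wXb)^-||_1  <= mu.  Unfolded: for each such beta the
   ratio is finite (denominator > 0, otherwise the ratio is +infinity) and <= mu. *)
Definition mu_complex (n d : nat) (w : nat -> R) (X : nat -> nat -> R) (mu : R) : Prop :=
  forall beta : nat -> R,
    ~ vzero n (DwXb d w X beta) ->
    0 < neg_norm1 n (DwXb d w X beta) /\
    pos_norm1 n (DwXb d w X beta) / neg_norm1 n (DwXb d w X beta) <= mu.

Definition orthonormal_cols (n k : nat) (U : nat -> nat -> R) : Prop :=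
  forall a b, (a < k)%nat -> (b < k)%nat ->
    rsum n (fun i => U i a * U i b) = if Nat.eqb a b then 1 else 0.

Definition same_colspace (n d k : nat) (w : nat -> R) (X U : nat -> nat -> R) : Prop :=
  forall v : nat -> R,
    (exists beta : nat -> R, forall i, (i < n)%nat -> v i = DwXb d w X beta i) <->
    (exists c : nat -> R, forall i, (i < n)%nat -> v i = rsum k (fun a => U i a * c a)).

Definition row_norm2 (k : nat) (U : nat -> nat -> R) (i : nat) : R :=
  sqrt (rsum k (fun a => U i a ^ 2)).

(* Main.v *)
Require Import Defs.
From Stdlib Require Import Reals Lra Lia Psatz.
Open Scope R_scope.

Lemma rsum_ext n f h : (forall j, (j < n)%nat -> f j = h j) -> rsum n f = rsum n h.
Proof. induction n; simpl; intros H; [reflexivity|]. rewrite IHn by (intros; apply H; lia). rewrite H by lia. reflexivity. Qed.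

Lemma rsum_le n f h : (forall j, (j < n)%nat -> f j <= h j) -> rsum n f <= rsum n h.
Proof. induction n; simpl; intros H; [lra|]. assert (H1 := H n ltac:(lia)). assert (rsum n f <= rsum n h) by (apply IHn; intros; apply H; lia). lra. Qed.

Lemma rsum_plus n f h : rsum n (fun j => f j + h j) = rsum n f + rsum n h.
Proof. induction n; simpl; [lra|]. rewrite IHn. lra. Qed.

Lemma rsum_scal n c f : rsum n (fun j => c * f j) = c * rsum n f.
Proof. induction n; simpl; [lra|]. rewrite IHn. lra. Qed.

Lemma rsum_opp n f : rsum n (fun j => - f j) = - rsum n f.
Proof. induction n; simpl; [lra|]. rewrite IHn. lra. Qed.

Lemma rsum_zero n : rsum n (fun _ => 0) = 0.
Proof. induction n; simpl; [lra|]. rewrite IHn. lra. Qed.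

Lemma rsum_nonneg n f : (forall j, (j < n)%nat -> 0 <= f j) -> 0 <= rsum n f.
Proof. intros H. rewrite <- (rsum_zero n). apply rsum_le. exact H. Qed.

Lemma rsum_term n f j : (forall j, (j < n)%nat -> 0 <= f j) -> (j < n)%nat -> f j <= rsum n f.
Proof. induction n; simpl; intros H Hj; [lia|].
  assert (0 <= rsum n f) by (apply rsum_nonneg; intros; apply H; lia).
  destruct (Nat.eq_dec j n) as [->|Hne].
  - lra.
  - assert (f j <= rsum n f) by (apply IHn; [intros; apply H; lia|lia]).
    assert (0 <= f n) by (apply H; lia). lra.
Qed.

Lemma rsum_swap n k (F : nat -> nat -> R) :
  rsum n (fun j => rsum k (fun a => F j a)) = rsum k (fun a => rsum n (fun j => F j a)).
Proof. induction n; simpl. - rewrite rsum_zero. reflexivity.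
  - rewrite IHn. rewrite <- rsum_plus. reflexivity. Qed.

Lemma rsum_delta k a c : (a < k)%nat ->
  rsum k (fun b => c b * (if Nat.eqb a b then 1 else 0)) = c a.
Proof. induction k; simpl; intros Ha; [lia|].
  destruct (Nat.eq_dec a k) as [->|Hne].
  - rewrite Nat.eqb_refl. rewrite (rsum_ext k _ (fun _ => 0)). rewrite rsum_zero. lra.
    intros j Hj. destruct (Nat.eqb_spec k j); [lia|lra].
  - rewrite IHk by lia. destruct (Nat.eqb_spec a k); [lia|lra].
Qed.

Lemma rsum_mul k f h : rsum k f * rsum k h = rsum k (fun a => rsum k (fun b => f a * h b)).
Proof. rewrite Rmult_comm. rewrite <- rsum_scal.
  apply rsum_ext; intros a _. rewrite Rmult_comm, <- rsum_scal. apply rsum_ext; intros; lra. Qed.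

Lemma cs n a b : rsum n (fun j => a j * b j) <= sqrt (rsum n (fun j => a j ^ 2)) * sqrt (rsum n (fun j => b j ^ 2)).
Proof.
  set (A := rsum n (fun j => a j ^ 2)). set (B := rsum n (fun j => b j ^ 2)).
  set (S := rsum n (fun j => a j * b j)).
  assert (HA : 0 <= A) by (apply rsum_nonneg; intros; apply pow2_ge_0).
  assert (HB : 0 <= B) by (apply rsum_nonneg; intros; apply pow2_ge_0).
  set (u := sqrt A). set (v := sqrt B).
  assert (Hu : 0 <= u) by apply sqrt_pos. assert (Hv : 0 <= v) by apply sqrt_pos.
  assert (Hu2 : u * u = A) by (apply sqrt_sqrt; auto).
  assert (Hv2 : v * v = B) by (apply sqrt_sqrt; auto).
  destruct (Req_dec u 0) as [Hu0|Hu0].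
  - assert (A = 0) by nra.
    assert (S = 0). { unfold S. rewrite (rsum_ext n _ (fun _ => 0)). apply rsum_zero.
      intros j Hj. assert (a j ^ 2 <= A) by (apply (rsum_term n (fun j => a j ^ 2)); [intros; nra | lia]). 
      assert (a j = 0) by nra. rewrite H1; lra. }
    nra.
  - destruct (Req_dec v 0) as [Hv0|Hv0].
    + assert (B = 0) by nra.
    assert (S = 0). { unfold S. rewrite (rsum_ext n _ (fun _ => 0)). apply rsum_zero.
      intros j Hj. assert (b j ^ 2 <= B) by (apply (rsum_term n (fun j => b j ^ 2)); [intros; nra | lia]). 
      assert (b j = 0) by nra. rewrite H1; lra. }
    nra.
    + assert (H0 : 0 <= rsum n (fun j => (a j * v - b j * u) ^ 2)) by (apply rsum_nonneg; intros; apply pow2_ge_0).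
    rewrite (rsum_ext n _ (fun j => (v*v) * a j ^ 2 + ((-2 * u * v) * (a j * b j) + (u*u) * b j ^ 2))) in H0 by (intros; ring).
    rewrite rsum_plus, rsum_plus, !rsum_scal in H0. fold A B S in H0.
    assert (0 < u * v) by (apply Rmult_lt_0_compat; lra). nra.
Qed.

Lemma norm_U n k U c : orthonormal_cols n k U ->
  rsum n (fun j => (rsum k (fun a => U j a * c a)) ^ 2) = rsum k (fun a => c a ^ 2).
Proof. intros HU.
  rewrite (rsum_ext n _ (fun j => rsum k (fun a => rsum k (fun b => (c a * c b) * (U j a * U j b))))).
  2:{ intros j _. rewrite <- Rsqr_pow2. unfold Rsqr. rewrite rsum_mul. apply rsum_ext; intros a _.
      apply rsum_ext; intros; ring. }
  rewrite rsum_swap. apply rsum_ext; intros a Ha.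
  rewrite rsum_swap.
  rewrite (rsum_ext k _ (fun b => (c a * c b) * (if Nat.eqb a b then 1 else 0))).
  2:{ intros b Hb. rewrite rsum_scal. rewrite HU by auto. reflexivity. }
  rewrite rsum_delta by auto. ring.
Qed.

Lemma l2_l1 n z : rsum n (fun j => z j ^ 2) <= (rsum n (fun j => Rabs (z j))) ^ 2.
Proof. induction n; simpl; [lra|].
  assert (0 <= rsum n (fun j => Rabs (z j))) by (apply rsum_nonneg; intros; apply Rabs_pos).
  assert (Rabs (z n) * Rabs (z n) = z n * z n) by (rewrite <- Rabs_mult; apply Rabs_pos_eq; nra).
  assert (0 <= Rabs (z n)) by apply Rabs_pos.
  simpl in IHn. nra.
Qed.

Lemma ln_le' x y : 0 < x -> x <= y -> ln x <= ln y.
Proof. intros Hx [H|H]. - left. apply ln_increasing; auto. - subst; lra. Qed.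

Lemma g_ge t : Rmax t 0 <= g t.
Proof. unfold g. unfold Rmax. destruct (Rle_dec t 0).
  - rewrite <- ln_1. apply ln_le'; [lra|]. pose proof (exp_pos t). lra.
  - rewrite <- (ln_exp t) at 1. apply ln_le'; [apply exp_pos|]. lra.
Qed.

Lemma exp_half : 1.62 <= exp (1/2).
Proof.
  assert (H := exp_ineq1 (1/16) ltac:(lra)).
  assert (E : exp (1/2) = exp (1/16) ^ 8).
  { replace (1/2) with (1/16+(1/16+(1/16+(1/16+(1/16+(1/16+(1/16+1/16))))))) by lra. rewrite !exp_plus. ring. }
  rewrite E. assert (1.0625 <= exp (1/16)) by lra.
  assert (1.0625 ^ 8 <= exp (1/16) ^ 8) by (apply pow_incr; lra).
  assert (1.62 <= 1.0625 ^ 8) by (simpl; lra). lra.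
Qed.

Lemma g_le t : 1/2 <= t -> g t <= 2 * t.
Proof. intros Ht. unfold g. rewrite <- (ln_exp (2*t)). apply ln_le'.
  - pose proof (exp_pos t); lra.
  - assert (exp (2*t) = exp t * exp t) by (rewrite <- exp_plus; f_equal; lra).
    assert (exp (1/2) <= exp t) by ((destruct (Req_dec t (1/2)) as [->|]; [lra| left; apply exp_increasing; lra])).
    pose proof exp_half. nra.
Qed.

Lemma rowdot_opp d X j beta : rowdot d X j (fun j => - beta j) = - rowdot d X j beta.
Proof. unfold rowdot. rewrite <- rsum_opp. apply rsum_ext; intros; ring. Qed.

Lemma abs_max v : Rabs v = Rmax v 0 + Rmax (- v) 0.
Proof. unfold Rmax, Rabs. destruct (Rcase_abs v); destruct (Rle_dec v 0); destruct (Rle_dec (-v) 0); lra. Qed.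

Theorem lemma7 (n d k : nat) (X : nat -> nat -> R) (w : nat -> R) (mu : R)
  (U : nat -> nat -> R)
  (hw : forall i, (i < n)%nat -> 0 < w i)
  (hmu : mu_complex n d w X mu)
  (hUorth : orthonormal_cols n k U)
  (hUspan : same_colspace n d k w X U) :
  forall (i : nat) (beta : nat -> R),
    (i < n)%nat -> 1/2 <= rowdot d X i beta ->
    w i * g (rowdot d X i beta) <= 2 * (1 + mu) * row_norm2 k U i * f_w n d w X beta.
Proof.
  intros i beta Hi Ht.
  set (t := rowdot d X i beta) in *.
  set (z := DwXb d w X beta).
  assert (Hwi := hw i Hi).
  assert (Hzi : z i = w i * t) by reflexivity.
  set (P := pos_norm1 n z). set (N := neg_norm1 n z).
  destruct (hmu (fun j => - beta j)) as [HP HPN].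
  { intro Hv. specialize (Hv i Hi). unfold DwXb in Hv. rewrite rowdot_opp in Hv. fold t in Hv. nra. }
  assert (E1 : pos_norm1 n (DwXb d w X (fun j => - beta j)) = N).
  { unfold N, neg_norm1, pos_norm1. apply rsum_ext; intros j _. unfold z, DwXb. rewrite rowdot_opp. f_equal. ring. }
  assert (E2 : neg_norm1 n (DwXb d w X (fun j => - beta j)) = P).
  { unfold P, neg_norm1, pos_norm1. apply rsum_ext; intros j _. unfold z, DwXb. rewrite rowdot_opp. f_equal. ring. }
  rewrite E1, E2 in HPN. rewrite E2 in HP.
  assert (HN0 : 0 <= N) by (apply rsum_nonneg; intros; apply Rmax_r).
  assert (HNP : N <= mu * P).
  { replace N with ((N / P) * P) by (field; lra). apply Rmult_le_compat_r; lra. }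
  assert (Hmu0 : 0 <= mu).
  { assert (0 <= N / P) by (apply Rmult_le_pos; [lra| left; apply Rinv_0_lt_compat; lra]). lra. }
  destruct (proj1 (hUspan z)) as [c Hc]; [exists beta; intros; reflexivity|].
  set (Rn := row_norm2 k U i).
  assert (HR0 : 0 <= Rn) by apply sqrt_pos.
  assert (H1 : z i <= Rn * sqrt (rsum k (fun a => c a ^ 2))).
  { rewrite (Hc i Hi). apply cs. }
  assert (H2 : rsum k (fun a => c a ^ 2) = rsum n (fun j => z j ^ 2)).
  { rewrite <- (norm_U n k U c hUorth). apply rsum_ext; intros j Hj. rewrite (Hc j Hj). reflexivity. }
  assert (H3 : sqrt (rsum n (fun j => z j ^ 2)) <= rsum n (fun j => Rabs (z j))).
  { rewrite <- (sqrt_pow2 (rsum n (fun j => Rabs (z j)))).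
    - apply sqrt_le_1_alt. apply l2_l1.
    - apply rsum_nonneg; intros; apply Rabs_pos. }
  assert (H4 : rsum n (fun j => Rabs (z j)) = P + N).
  { unfold P, N, pos_norm1, neg_norm1. rewrite <- rsum_plus. apply rsum_ext; intros; apply abs_max. }
  assert (H5 : P <= f_w n d w X beta).
  { unfold P, pos_norm1, f_w. apply rsum_le; intros j Hj. unfold z, DwXb.
    assert (Hwj := hw j Hj). set (r := rowdot d X j beta).
    pose proof (g_ge r). pose proof (Rmax_l r 0). pose proof (Rmax_r r 0).
    apply Rmax_lub; nra. }
  assert (H6 : g t <= 2 * t) by (apply g_le; lra).
  rewrite H2 in H1.
  assert (H7 : z i <= Rn * (P + N)).
  { rewrite <- H4. eapply Rle_trans; [exact H1|]. apply Rmult_le_compat_l; auto. }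
  assert (H8 : P + N <= (1 + mu) * f_w n d w X beta) by nra.
  assert (H9 : Rn * (P + N) <= Rn * ((1 + mu) * f_w n d w X beta)) by (apply Rmult_le_compat_l; auto).
  assert (w i * g t <= 2 * (w i * t)) by nra.
  nra.
Qed.
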